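(* Let $\mathbb{D}$ be $[0,1]^2$ or a mesh, and let $A,B:\mathbb{D}\to\mathbb{R}$ satisfy (Q1) $A\le B$ and (Q2) $L^{(A,B)}(R)\ge0$ for all $R\in\mathfrak{R}$. Suppose $\mathbf{x}\in\mathbb{D}$ satisfies $t_0=\gamma^{(A,B)}(\mathbf{x})>0$. For $0<t\le t_0$ define $A':\mathbb{D}\to\mathbb{R}$ by $A'(\mathbf{x})=A(\mathbf{x})+t$ and $A'(\mathbf{y})=A(\mathbf{y})$ for $\mathbf{y}\ne\mathbf{x}$. Then $(A',B)$ satisfies (Q1) and (Q2). Moreover, if $t=t_0$, then $\gamma^{(A',B)}(\mathbf{x})=0$.
   Context: A rectangle is $[s_1,s_2]\times[t_1,t_2]$ with $s_1<s_2$, $t_1<t_2$ and all four corners in $\mathbb{D}$; its main corners are the southwest $(s_1,t_1)$ and northeast $(s_2,t_2)$, its opposite corners the southeast $(s_2,t_1)$ and northwest $(s_1,t_2)$. $\mathfrak{R}$ is the set of finite formal unions $R=R_1\sqcup\dots\sqcup R_n$ of rectangles (repetitions allowed). The multiplicity of a point $\mathbf{y}$ is $m_R(\mathbf{y})=\sum_{i=1}^n m_{R_i}(\mathbf{y})$, where for a single rectangle $m_{R_i}(\mathbf{y})=1$ if $\mathbf{y}$ is a main corner, $-1$ if an opposite corner, $0$ otherwise. For real functions $A,B$ on $\mathbb{D}$: $L^{(A,B)}(R)=\sum_{m_R(\mathbf{y})>0}B(\mathbf{y})m_R(\mathbf{y})+\sum_{m_R(\mathbf{y})<0}A(\mathbf{y})m_R(\mathbf{y})$;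 $P_M^{(A,B)}(\mathbf{x})=\inf\{L^{(A,B)}(R)/m_R(\mathbf{x}):R\in\mathfrak{R},m_R(\mathbf{x})>0\}$; $P_O^{(A,B)}(\mathbf{x})=\inf\{L^{(A,B)}(R)/(-m_R(\mathbf{x})):R\in\mathfrak{R},m_R(\mathbf{x})<0\}$, with $\inf\emptyset=+\infty$; and $\gamma^{(A,B)}(\mathbf{x})=\min\{P_O^{(A,B)}(\mathbf{x}),B(\mathbf{x})-A(\mathbf{x})\}$. *)

(* Defs.v *)
From Stdlib Require Import Reals ZArith List ClassicalEpsilon.
Import ListNotations.
Open Scope R_scope.

Definition pt := (R * R)%type.

Definition pt_eq_dec (p q : pt) : {p = q} + {p <> q}.
Proof.
  destruct p as [a b], q as [c d].
  destruct (Req_EM_T a c) as [H1|H1]; destruct (Req_EM_T b d) as [H2|H2];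
  [left; subst; reflexivity | right; intros H; inversion H; contradiction
  | right; intros H; inversion H; contradiction | right; intros H; inversion H; contradiction].
Defined.

Definition unit_square (p : pt) : Prop :=
  0 <= fst p <= 1 /\ 0 <= snd p <= 1.

Definition is_mesh (D : pt -> Prop) : Prop :=
  exists xs ys : list R,
    (forall s, In s xs -> 0 <= s <= 1) /\ (forall t, In t ys -> 0 <= t <= 1) /\
    (forall p, D p <-> In (fst p) xs /\ In (snd p) ys).

Record rect := mkRect { s1 : R; s2 : R; t1 : R; t2 : R }.

Definition sw (r : rect) : pt := (s1 r, t1 r).
Definition ne (r : rect) : pt := (s2 r, t2 r).
Definition se (r : rect) : pt := (s2 r, t1 r).
Definition nw (r : rect) : pt := (s1 r, t2 r).

Definition valid_rect (D : pt -> Prop) (r : rect) : Prop :=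
  s1 r < s2 r /\ t1 r < t2 r /\
  D (sw r) /\ D (ne r) /\ D (se r) /\ D (nw r).

(* Elements of frak R: finite formal unions (lists, repetitions allowed). *)
Definition rect_union := list rect.

Definition valid_union (D : pt -> Prop) (Rs : rect_union) : Prop :=
  Forall (valid_rect D) Rs.

Definition mult_rect (r : rect) (y : pt) : Z :=
  if pt_eq_dec y (sw r) then 1%Z
  else if pt_eq_dec y (ne r) then 1%Z
  else if pt_eq_dec y (se r) then (-1)%Z
  else if pt_eq_dec y (nw r) then (-1)%Z
  else 0%Z.

Definition mult (Rs : rect_union) (y : pt) : Z :=
  fold_right (fun r acc => (mult_rect r y + acc)%Z) 0%Z Rs.

Definition corner_pts (Rs : rect_union) : list pt :=
  nodup pt_eq_dec (flat_map (fun r => [sw r; ne r; se r; nw r]) Rs).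

Definition L_AB (A B : pt -> R) (Rs : rect_union) : R :=
  fold_right
    (fun y acc =>
       let m := mult Rs y in
       (if Z_lt_dec 0 m then B y * IZR m
        else if Z_lt_dec m 0 then A y * IZR m else 0) + acc)
    0 (corner_pts Rs).

Definition Q1 (D : pt -> Prop) (A B : pt -> R) : Prop :=
  forall y, D y -> A y <= B y.

Definition Q2 (D : pt -> Prop) (A B : pt -> R) : Prop :=
  forall Rs, valid_union D Rs -> 0 <= L_AB A B Rs.

Inductive Rbar := Fin (r : R) | PInf | MInf.

Definition Rbar_le (a b : Rbar) : Prop :=
  match a, b with
  | MInf, _ => True
  | _, PInf => True
  | Fin x, Fin y => x <= y
  | _, _ => False
  end.

Definition Rbar_min (a : Rbar) (r : R) : Rbar :=
  match a with
  | PInf => Fin r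
  | MInf => MInf
  | Fin x => Fin (Rmin x r)
  end.

(* v is the infimum (in the extended reals) of S; inf of empty set = +oo. *)
Definition is_inf_Rbar (S : R -> Prop) (v : Rbar) : Prop :=
  (forall r, S r -> Rbar_le v (Fin r)) /\
  (forall w, (forall r, S r -> Rbar_le w (Fin r)) -> Rbar_le w v).

Definition P_O_set (D : pt -> Prop) (A B : pt -> R) (x : pt) (v : R) : Prop :=
  exists Rs, valid_union D Rs /\ (mult Rs x < 0)%Z /\
             v = L_AB A B Rs / (- IZR (mult Rs x)).

Definition P_O (D : pt -> Prop) (A B : pt -> R) (x : pt) : Rbar :=
  epsilon (inhabits PInf) (is_inf_Rbar (P_O_set D A B x)).

Definition gamma (D : pt -> Prop) (A B : pt -> R) (x : pt) : Rbar :=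
  Rbar_min (P_O D A B x) (B x - A x).

Definition bump (A : pt -> R) (x : pt) (t : R) : pt -> R :=
  fun y => if pt_eq_dec y x then A y + t else A y.

(* Main.v *)
Require Import Defs.
From Stdlib Require Import Reals ZArith List ClassicalEpsilon Lra Lia Classical.
Open Scope R_scope.

Lemma fold_eq (f g : pt -> R) l :
  (forall y, In y l -> g y = f y) ->
  fold_right (fun y acc => g y + acc) 0 l = fold_right (fun y acc => f y + acc) 0 l.
Proof.
  induction l as [|a l IH]; intros H; simpl; auto.
  rewrite H by (left; auto). rewrite IH; auto. intros y Hy; apply H; right; auto.
Qed.

Lemma fold_sum_change (f g : pt -> R) x d l : NoDup l ->
  (forall y, y <> x -> g y = f y) -> g x = f x + d -> (~ In x l -> d = 0) ->
  fold_right (fun y acc => g y + acc) 0 l = fold_right (fun y acc => f y + acc) 0 l + d.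
Proof.
  intros ND Hg Hx Hd. induction l as [|a l IH]; simpl.
  - rewrite Hd; [lra | simpl; auto].
  - apply NoDup_cons_iff in ND as [Na ND].
    destruct (pt_eq_dec a x) as [->|Hne].
    + rewrite Hx, (fold_eq f g l); [lra|].
      intros y Hy; apply Hg; intros ->; contradiction.
    + rewrite Hg by auto. rewrite IH; auto; [lra|].
      intros Hn; apply Hd; intros [H|H]; [congruence|contradiction].
Qed.

Lemma mult_not_corner Rs x : ~ In x (corner_pts Rs) -> mult Rs x = 0%Z.
Proof.
  unfold corner_pts. rewrite nodup_In. induction Rs as [|r Rs IH]; intros H; simpl; auto.
  rewrite IH. 2:{ intros Hn; apply H; simpl; tauto. }
  unfold mult_rect.
  destruct (pt_eq_dec x (sw r)); [exfalso; apply H; simpl; subst; tauto|].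
  destruct (pt_eq_dec x (ne r)); [exfalso; apply H; simpl; subst; tauto|].
  destruct (pt_eq_dec x (se r)); [exfalso; apply H; simpl; subst; tauto|].
  destruct (pt_eq_dec x (nw r)); [exfalso; apply H; simpl; subst; tauto|].
  reflexivity.
Qed.

Lemma L_bump A B x t Rs :
  L_AB (bump A x t) B Rs = L_AB A B Rs +
    (if Z_lt_dec (mult Rs x) 0 then t * IZR (mult Rs x) else 0).
Proof.
  unfold L_AB. cbv zeta.
  apply (@fold_sum_change
    (fun y => if Z_lt_dec 0 (mult Rs y) then B y * IZR (mult Rs y)
              else if Z_lt_dec (mult Rs y) 0 then A y * IZR (mult Rs y) else 0)
    (fun y => if Z_lt_dec 0 (mult Rs y) then B y * IZR (mult Rs y)
              else if Z_lt_dec (mult Rs y) 0 then bump A x t y * IZR (mult Rs y) else 0) x).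
  - apply NoDup_nodup.
  - intros y Hy. unfold bump. destruct (pt_eq_dec y x); [contradiction|reflexivity].
  - unfold bump. destruct (pt_eq_dec x x); [|contradiction].
    destruct (Z_lt_dec 0 (mult Rs x)); destruct (Z_lt_dec (mult Rs x) 0); try lia; ring.
  - intros Hn. rewrite (mult_not_corner _ _ Hn). destruct (Z_lt_dec 0 0); [lia|reflexivity].
Qed.

Lemma inf_exists (S : R -> Prop) : exists v, is_inf_Rbar S v.
Proof.
  destruct (classic (exists r, S r)) as [[r0 Hr0]|HnE].
  2:{ exists PInf; split.
      - intros r Hr; exfalso; apply HnE; eauto.
      - intros w _; destruct w; simpl; auto. }
  destruct (classic (exists a, forall r, S r -> a <= r)) as [[a Ha]|HnB].
  - destruct (completeness (fun r => S (- r))) as [m [Hm1 Hm2]].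
    + exists (- a). intros r Hr. specialize (Ha _ Hr). lra.
    + exists (- r0). rewrite Ropp_involutive; auto.
    + exists (Fin (- m)); split.
      * intros r Hr. simpl. assert (- r <= m) by (apply Hm1; rewrite Ropp_involutive; auto). lra.
      * intros w Hw. destruct w as [b| |]; simpl; auto.
        -- assert (m <= - b). { apply Hm2. intros r Hr. specialize (Hw _ Hr). simpl in Hw. lra. }
           lra.
        -- exact (Hw _ Hr0).
  - exists MInf; split.
    + intros; simpl; auto.
    + intros w Hw. destruct w as [b| |]; simpl; auto.
      * apply HnB. exists b. intros r Hr. exact (Hw _ Hr).
      * exact (Hw _ Hr0).
Qed.

Lemma P_O_spec D A B x : is_inf_Rbar (P_O_set D A B x) (P_O D A B x).
Proof.
  unfold P_O. apply epsilon_spec. apply inf_exists.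
Qed.

Lemma Rbar_le_antisym a b : Rbar_le a b -> Rbar_le b a -> a = b.
Proof.
  destruct a, b; simpl; intros; try contradiction; auto. f_equal; lra.
Qed.

Lemma inf_unique S v w : is_inf_Rbar S v -> is_inf_Rbar S w -> v = w.
Proof.
  intros [H1 H2] [H3 H4]. apply Rbar_le_antisym; auto.
Qed.

Definition shift (c : R) (v : Rbar) : Rbar :=
  match v with Fin p => Fin (p - c) | o => o end.

Lemma inf_shift (S S' : R -> Prop) c v :
  (forall r, S' r -> S (r + c)) -> (forall s, S s -> S' (s - c)) ->
  is_inf_Rbar S v -> is_inf_Rbar S' (shift c v).
Proof.
  intros H1 H2 [L G]; split.
  - intros r Hr. specialize (L _ (H1 _ Hr)). destruct v; simpl in *; auto; lra.
  - intros w Hw.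
    assert (G' : Rbar_le (shift (- c) w) v).
    { apply G. intros s Hs. specialize (Hw _ (H2 _ Hs)). destruct w; simpl in *; auto; lra. }
    destruct w, v; simpl in *; auto; lra.
Qed.

Theorem mainTheorem11 :
  forall (D : pt -> Prop),
    (forall p, D p <-> unit_square p) \/ is_mesh D ->
  forall (A B : pt -> R),
    Q1 D A B -> Q2 D A B ->
  forall (x : pt), D x ->
  forall t0 : R, gamma D A B x = Fin t0 -> 0 < t0 ->
  forall t : R, 0 < t <= t0 ->
    Q1 D (bump A x t) B /\ Q2 D (bump A x t) B /\
    (t = t0 -> gamma D (bump A x t) B x = Fin 0).
Proof.
  intros D _ A B HQ1 HQ2 x Dx t0 Hg Ht0 t Ht.
  pose proof (P_O_spec D A B x) as [PL PG].
  assert (Hlow : (forall r, P_O_set D A B x r -> t0 <= r) /\ t0 <= B x - A x).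
  { unfold gamma in Hg. destruct (P_O D A B x) as [p| |] eqn:E; simpl in Hg.
    - injection Hg as <-. split.
      + intros r Hr. specialize (PL _ Hr). simpl in PL. pose proof (Rmin_l p (B x - A x)). lra.
      + apply Rmin_r.
    - injection Hg as <-. split; [|lra]. intros r Hr. exact (False_ind _ (PL _ Hr)).
    - discriminate. }
  destruct Hlow as [Hlow Hba].
  split; [|split].
  - intros y Dy. unfold bump. destruct (pt_eq_dec y x) as [->|]; [lra|auto].
  - intros Rs HRs. rewrite L_bump. specialize (HQ2 _ HRs).
    destruct (Z_lt_dec (mult Rs x) 0) as [Hm|Hm]; [|lra].
    assert (Hk : 0 < - IZR (mult Rs x)).
    { apply IZR_lt in Hm. lra. }
    assert (Hr : t0 <= L_AB A B Rs / (- IZR (mult Rs x))).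
    { apply Hlow. exists Rs; auto. }
    assert (E : L_AB A B Rs = (L_AB A B Rs / (- IZR (mult Rs x))) * (- IZR (mult Rs x)))
      by (field; lra).
    nra.
  - intros ->.
    assert (Hinf : is_inf_Rbar (P_O_set D (bump A x t0) B x) (shift t0 (P_O D A B x))).
    { apply (inf_shift (P_O_set D A B x)); [| |split; auto].
      - intros r [Rs [HRs [Hm ->]]]. exists Rs; split; [auto|split; [auto|]].
        rewrite L_bump. destruct (Z_lt_dec (mult Rs x) 0); [|lia].
        assert (IZR (mult Rs x) < 0) by (apply IZR_lt; auto). field; lra.
      - intros s [Rs [HRs [Hm ->]]]. exists Rs; split; [auto|split; [auto|]].
        rewrite L_bump. destruct (Z_lt_dec (mult Rs x) 0); [|lia].
        assert (IZR (mult Rs x) < 0) by (apply IZR_lt; auto). field; lra. }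
    unfold gamma.
    rewrite (inf_unique _ _ _ (P_O_spec D (bump A x t0) B x) Hinf).
    assert (Hb : bump A x t0 x = A x + t0).
    { unfold bump. destruct (pt_eq_dec x x); [auto|contradiction]. }
    rewrite Hb. unfold gamma in Hg.
    destruct (P_O D A B x) as [p| |]; simpl in *.
    + injection Hg as Hg. f_equal. unfold Rmin in *.
      destruct (Rle_dec p (B x - A x)); destruct (Rle_dec (p - t0) (B x - (A x + t0))); lra.
    + injection Hg as Hg. f_equal. lra.
    + discriminate.
Qed.
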